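(* Let $w$ be a string of length $n$ and $i$ a position of $w$ with $i-\mu(i)\ge1$, $i+\mu(i)-1\le n$ and $\mu(i)>1$. Then for every integer $j$ with $i<j<i+\mu(i)$ such that $j-\mu(j)<i$ and $\mu(j)\ne\mu(i)$, we have either $\mu(j)<\frac12\mu(i)$ or $\mu(j)\ge 2\mu(i)$.
   Context: For a position $i\in\{1,\dots,n\}$ of $w$, the local period $\mu(i)$ is the least positive integer $\mu$ such that $w[j]=w[j+\mu]$ for all $j$ with $\max\{1,i-\mu\}\le j$ and $j+\mu\le\min\{n,i+\mu-1\}$. *)

(* Defs.v *)
From mathcomp Require Import all_boot.
Set Implicit Arguments. Unset Strict Implicit. Unset Printing Implicit Defensive.

(* Strings are [seq T] over an eqType alphabet; positions are 1-indexed.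
   [letter w k] is w[k] (as an option; positions 1..size w give Some _). *)
Definition letter (T : eqType) (w : seq T) (k : nat) : option T :=
  nth None (map Some w) k.-1.

Definition lp_ok (T : eqType) (w : seq T) (i mu : nat) : bool :=
  (0 < mu) &&
  all (fun j => letter w j == letter w (j + mu))
      [seq j <- iota 0 (size w).+1 |
        (maxn 1 (i - mu) <= j) && (j + mu <= minn (size w) (i + mu - 1))].

Lemma lp_ok_exists (T : eqType) (w : seq T) (i : nat) :
  exists mu, lp_ok w i mu.
Proof.
exists (size w).+1; rewrite /lp_ok; apply/andP; split=> //.
apply/allP => j; rewrite mem_filter => /andP [/andP [H1 H2] _].
exfalso; move: H1 H2; rewrite geq_max => /andP [Hj _].
rewrite leq_min => /andP [Hn _].
by move: Hn; rewrite addnS ltnNge leq_addl.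
Qed.

Definition local_period (T : eqType) (w : seq T) (i : nat) : nat :=
  ex_minn (lp_ok_exists w i).

(* Main.v *)
Require Import Defs.
From mathcomp Require Import all_boot.
From mathcomp Require Import zify.

Lemma use_ok (T : eqType) (w : seq T) c q k k' : lp_ok w c q -> k' = k + q ->
  1 <= k -> c - q <= k -> k + q <= size w -> k < c -> letter w k = letter w k'.
Proof.
move=> /andP[q0 /allP H] -> k1 k2 k3 k4; apply/eqP; apply: H.
rewrite mem_filter mem_iota geq_max leq_min; apply/andP; split; first lia.
lia.
Qed.

Arguments use_ok {T w c q k k'}.

Lemma mk_ok (T : eqType) (w : seq T) c q : 0 < q ->
  (forall k, 1 <= k -> c - q <= k -> k + q <= size w -> k < c ->
     letter w k = letter w (k + q)) -> lp_ok w c q.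
Proof.
move=> q0 H; apply/andP; split=> //; apply/allP=> k.
rewrite mem_filter mem_iota geq_max leq_min => /andP[/andP[/andP[H1 H2] /andP[H3 H4]] _].
apply/eqP; apply: H; lia.
Qed.

Theorem lemma7 (T : eqType) (w : seq T) (i : nat) :
  1 <= i <= size w ->
  local_period w i + 1 <= i ->
  i + local_period w i - 1 <= size w ->
  1 < local_period w i ->
  forall j : nat,
    i < j < i + local_period w i ->
    j < i + local_period w j ->
    local_period w j <> local_period w i ->
    2 * local_period w j < local_period w i \/
    2 * local_period w i <= local_period w j.
Proof.
move=> /andP[i1 iw] hm1 hm2 hm3 j /andP[ij jm] jp pm.
have [Hm minm] : lp_ok w i (local_period w i) /\
    forall q, lp_ok w i q -> local_period w i <= q.
  by rewrite /local_period; case: ex_minnP.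
have [Hp minp] : lp_ok w j (local_period w j) /\
    forall q, lp_ok w j q -> local_period w j <= q.
  by rewrite /local_period; case: ex_minnP.
move: hm1 hm2 hm3 jm pm jp Hm minm Hp minp.
set m := local_period w i; set p := local_period w j.
move=> hm1 hm2 hm3 jm pm jp Hm minm Hp minp.
have p0 : 0 < p by case/andP: Hp.
case: (ltnP (2*p) m) => [|h1]; first by left.
case: (leqP (2*m) p) => [|h2]; first by right.
exfalso.
case: (ltngtP p m) => [pltm | mltp | peq]; last by [].
-
  case: (eqVneq (2*p) m) => [e|ne].
  + have : m <= p; last lia.
    apply: minm; apply: mk_ok => // x x1 x2 x3 x4.
    case: (leqP (j-p) x) => hx.
    * apply: (use_ok Hp); lia.
    * have e1 : letter w x = letter w (x+m) by apply: (use_ok Hm); lia.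
      have e2 : letter w (x+p) = letter w (x+m) by apply: (use_ok Hp); lia.
      by rewrite e1 e2.
  case: (leqP (m-p) (j-i)) => hd.
  + have : m <= m - p; last lia.
    apply: minm; apply: mk_ok; first lia.
    move=> x x1 x2 x3 x4.
    have e1 : letter w x = letter w (x+m) by apply: (use_ok Hm); lia.
    have e2 : letter w (x+(m-p)) = letter w (x+m) by apply: (use_ok Hp); lia.
    by rewrite e1 e2.
  + have : p <= 2*p - m; last lia.
    apply: minp; apply: mk_ok; first lia.
    move=> y y1 y2 y3 y4.
    have e1 : letter w (y - (m-p)) = letter w (y + (2*p-m)) by apply: (use_ok Hp); lia.
    have e2 : letter w (y - (m-p)) = letter w (y + p) by apply: (use_ok Hm); lia.
    have e3 : letter w y = letter w (y + p) by apply: (use_ok Hp); lia.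
    by rewrite e3 -e2 e1.
-
  case: (leqP (j-i) (p-m)) => hd.
  + have : m <= 2*m - p; last lia.
    apply: minm; apply: mk_ok; first lia.
    move=> y y1 y2 y3 y4.
    have e1 : letter w (y - (p-m)) = letter w (y + (2*m-p)) by apply: (use_ok Hm); lia.
    have e2 : letter w (y - (p-m)) = letter w (y + m) by apply: (use_ok Hp); lia.
    have e3 : letter w y = letter w (y + m) by apply: (use_ok Hm); lia.
    by rewrite e3 -e2 e1.
  + have : p <= p - m; last lia.
    apply: minp; apply: mk_ok; first lia.
    move=> y y1 y2 y3 y4.
    have e1 : letter w (y - m) = letter w y by apply: (use_ok Hm); lia.
    have e2 : letter w (y - m) = letter w (y + (p-m)) by apply: (use_ok Hp); lia.
    by rewrite -e1 e2.
Qed.
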